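(* Consider the following online reputation model. A random state $x\in\mathbb X=\{1,\dots,X\}$ has prior $\pi_0$ with $\pi_0(i)>0$ for all $i$. Nodes $n=1,2,\dots$ (node $n$ represents agent $s$ at time $k$ via $n=s+S(k-1)$, $s\in\{1,\dots,S\}$) act in increasing order of $n$. Information flow is given by a directed acyclic graph on $\{1,2,\dots\}$ whose edges $(m,n)$ all satisfy $m<n$; $A_n$ is its $n\times n$ adjacency matrix restricted to nodes $1,\dots,n$, with $A_n(m,n')=1$ iff there is an edge from $m$ to $n'$ (so $A_n$ is strictly upper triangular), and $T_n=\operatorname{sgn}((I_n-A_n)^{-1})$ is its transitive closure matrix ($\operatorname{sgn}$ applied entrywise: $0\mapsto0$, nonzero $\mapsto1$). Let $\mathcal F_n=\{m<n: T_n(m,n)=1\}$ (nodes with a directed path to $n$). Private observations $y_1,y_2,\dots\in\mathbb Y=\{1,\dots,Y\}$ are conditionally i.i.d. given $x$ with $P(y_n=y\mid x=i)=B_{iy}>0$. Node $n$ proceeds as follows: it is given a prior (recommendation) belief $\pi_{n-}$; it computes $\eta_n=B_{y_n}\pi_{n-}/(\mathbf 1_X'B_{y_n}\pi_{n-})$ with $B_y=\operatorname{diag}(B_{1y},\dots,B_{Xy})$; it takes the action $a_n=a(\pi_{n-},y_n):=\arg\min_{a\in\mathcal A}c_a'\eta_n$ (fixed deterministic tie-breaking, given cost vectors $c_a$, $\mathcal A=\{1,\dots,A\}$); and the administrator computes the public belief $\pi_n(i)\propto P(a_n\mid x=i,\pi_{n-})\,\pi_{n-}(i)$, where $P(a\mid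 x=i,\pi)=\sum_{y}\mathbf 1\{a(\pi,y)=a\}B_{iy}$. Define $l_m(i)=\log\pi_m(i)-\log\pi_0(i)$. Suppose that for every $n$ the recommendation belief is computed by $$\log\pi_{n-}(i)=\log\pi_0(i)+\sum_{m=1}^{n-1}w_n(m)\,l_m(i)+\text{const}_n,\qquad w_n=T_{n-1}^{-1}t_n,$$ where $\text{const}_n$ does not depend on $i$ (it is fixed by normalization), $T_{n-1}$ is the upper-left $(n-1)\times(n-1)$ block of $T_n$ and $t_n\in\{0,1\}^{n-1}$ consists of the first $n-1$ entries of the $n$-th column of $T_n$ (for $n=1$ the sum is empty and $\pi_{1-}=\pi_0$). Then for every $n$ and $i\in\mathbb X$, $$\pi_{n-}(i)=\pi^0_{n-}(i):=P\big(x=i\mid \{a_m: m\in\mathcal F_n\}\big),$$ i.e. the recommendation equals the fair (incest-free) rating; consequently $\eta_n(i)=P(x=i\mid\{a_m:m\in\mathcal F_n\},y_n)$ and $\pi_n(i)=P(x=i\mid\{a_m:m\in\mathcal F_n\},a_n)$.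
   Context: Here $\pi^0_{n-}$ is called the fair online rating available to node $n$: it is the posterior of $x$ given exactly the actions of all nodes whose information eventually reaches node $n$ through the graph. $T_n$ has ones on the diagonal and $T_{n-1}$ is unit upper triangular, hence invertible. $\mathbf 1_X$ is the all-ones vector. *)

(* Defs.v *)
From HB Require Import structures.
From mathcomp Require Import all_boot all_algebra.
From Stdlib Require Import Reals.

Set Implicit Arguments.
Unset Strict Implicit.
Unset Printing Implicit Defensive.

Definition intZ (z : int) : Z :=
  match z with
  | Posz n => Z.of_nat n
  | Negz n => (- Z.of_nat n.+1)%Z
  end.

Definition ratR (q : rat) : R :=
  Rdiv (IZR (intZ (numq q))) (IZR (intZ (denq q))).

Local Open Scope ring_scope.
(* A_n : adjacency matrix on nodes 1..n (index i : 'I_n is node i+1). *)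
Definition Amat (edge : nat -> nat -> bool) (n : nat) : 'M[rat]_n :=
  \matrix_(i < n, j < n) (if edge i.+1 j.+1 then 1 else 0).

Definition Tmat (edge : nat -> nat -> bool) (n : nat) : 'M[rat]_n :=
  \matrix_(i < n, j < n)
    (if invmx (1%:M - Amat edge n) i j == 0 then 0 else 1).

(* For node n = k+1: T_{n-1} is the upper-left k x k block of T_n, t_n the
   first k entries of the last column of T_n, and w_n = T_{n-1}^{-1} t_n. *)
Definition Tblock (edge : nat -> nat -> bool) (k : nat) : 'M[rat]_k :=
  \matrix_(i < k, j < k)
    Tmat edge k.+1 (widen_ord (leqnSn k) i) (widen_ord (leqnSn k) j).

Definition tcol (edge : nat -> nat -> bool) (k : nat) : 'cV[rat]_k :=
  \col_(i < k) Tmat edge k.+1 (widen_ord (leqnSn k) i) ord_max.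

Definition wvec (edge : nat -> nat -> bool) (k : nat) : 'cV[rat]_k :=
  invmx (Tblock edge k) *m tcol edge k.

(* F_n for n = k+1: node j+1 (j : 'I_k) is in F_n iff T_n(j+1, n) = 1. *)
Definition inF (edge : nat -> nat -> bool) (k : nat) (j : 'I_k) : bool :=
  Tmat edge k.+1 (widen_ord (leqnSn k) j) ord_max == 1.
Local Close Scope ring_scope.

Open Scope R_scope.
Definition sumX (X : nat) (F : 'I_X -> R) : R := \big[Rplus/0]_(i < X) F i.

Definition etaOf (X Y : nat) (B : 'I_X -> 'I_Y -> R) (pi : 'I_X -> R)
    (y : 'I_Y) : 'I_X -> R :=
  fun i => Rdiv (B i y * pi i) (sumX (fun j => B j y * pi j)).

Definition Pact (X Y A : nat) (B : 'I_X -> 'I_Y -> R)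
    (sel : ('I_X -> R) -> 'I_A) (pi : 'I_X -> R) (a : 'I_A) (i : 'I_X) : R :=
  \big[Rplus/0]_(y < Y) (if sel (etaOf B pi y) == a then B i y else 0).

Definition pubUpdate (X Y A : nat) (B : 'I_X -> 'I_Y -> R)
    (sel : ('I_X -> R) -> 'I_A) (pi : 'I_X -> R) (a : 'I_A) : 'I_X -> R :=
  fun i => Rdiv (Pact B sel pi a i * pi i)
                (sumX (fun j => Pact B sel pi a j * pi j)).

(* Outcomes: the state x and observations of nodes 1..k+1 (f j = y_{j+1}).
   ext ys0 f : the full observation sequence that agrees with f on nodes
   1..k+1 and with ys0 elsewhere (irrelevant for actions of nodes <= k+1). *)
Definition ext (Y k : nat) (ys0 : nat -> 'I_Y) (f : {ffun 'I_k.+1 -> 'I_Y})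
    : nat -> 'I_Y :=
  fun m => if m is m'.+1 then oapp (fun j : 'I_k.+1 => f j) (ys0 m) (insub m')
           else ys0 m.

Definition jointP (X Y k : nat) (pi0 : 'I_X -> R) (B : 'I_X -> 'I_Y -> R)
    (i : 'I_X) (f : {ffun 'I_k.+1 -> 'I_Y}) : R :=
  pi0 i * \big[Rmult/1]_(j < k.+1) B i (f j).

Definition condP (X Y k : nat) (pi0 : 'I_X -> R) (B : 'I_X -> 'I_Y -> R)
    (ev : {ffun 'I_k.+1 -> 'I_Y} -> bool) (i : 'I_X) : R :=
  Rdiv (\big[Rplus/0]_(f : {ffun 'I_k.+1 -> 'I_Y} | ev f) jointP pi0 B i f)
       (sumX (fun j => \big[Rplus/0]_(f : {ffun 'I_k.+1 -> 'I_Y} | ev f)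
                          jointP pi0 B j f)).

(* Main.v *)
Require Import Defs.
From HB Require Import structures.
From mathcomp Require Import all_boot all_algebra.
From Stdlib Require Import Reals.
From Stdlib Require Import ClassicalEpsilon FunctionalExtensionality.
From mathcomp Require Import Rstruct lra ring.
Import mathcomp.order.order.Order.TTheory GRing.Theory Num.Theory.
Set Implicit Arguments.
Unset Strict Implicit.
Local Open Scope ring_scope.
Bind Scope ring_scope with R.

Lemma IZR_intZ (z : int) : IZR (intZ z) = (z%:~R : R).
Proof.
case: z => n /=.
  by rewrite -INR_IZR_INZ INRE.
rewrite NegzE; change (IZR (- Z.of_nat n.+1) = ((- (n.+1)%:Z)%:~R : R)); rewrite opp_IZR -INR_IZR_INZ INRE mulrNz; done.
Qed.

Lemma ratRE q : ratR q = ratr q.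
Proof. by rewrite /ratR !IZR_intZ RdivE. Qed.

Section Graph.
Variable edge : nat -> nat -> bool.
Hypothesis Hedge : forall m n, edge m n -> (leq 1 m && leq m.+1 n).

Inductive reach : nat -> nat -> Prop :=
| rrefl a : reach a a
| rstep a b c : edge a b -> reach b c -> reach a c.

Lemma reach_le a b : reach a b -> (a <= b)%nat.
Proof.
elim=> // x y z /Hedge /andP[_ h] _ h2; exact: leq_trans (ltnW h) h2.
Qed.

Lemma reach_inv a c : reach a c -> a = c \/ exists b, edge a b /\ reach b c.
Proof. case=> [x|x b y e r]; [by left | right; by exists b]. Qed.

Lemma reach_trans a b c : reach a b -> reach b c -> reach a c.
Proof. elim=> // x y z e _ IH h; apply: rstep e (IH h). Qed.

Lemma Amat_E n (i j : 'I_n) : Amat edge n i j = if edge i.+1 j.+1 then 1 else 0.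
Proof. by rewrite mxE. Qed.

Lemma Amat0 n (i j : 'I_n) : (j <= i)%nat -> Amat edge n i j = 0.
Proof.
move=> h; rewrite Amat_E; case E: edge => //.
by move: (Hedge E) => /andP[_]; rewrite ltnS leqNgt ltnS (leq_trans _ h) //.
Qed.

Lemma unit_IA n : (1%:M - Amat edge n) \in unitmx.
Proof.
rewrite unitmxE -det_tr det_trig.
  rewrite big1 ?unitr1 // => i _; rewrite !mxE eqxx -Amat_E Amat0 // subr0.
apply/is_trig_mxP => i j lt; rewrite !mxE -Amat_E Amat0 ?(ltnW lt) //.
case: eqP => // e; by move: lt; rewrite e ltnn.
Qed.

Definition Mm n := invmx (1%:M - Amat edge n).

Lemma M_rec n (i j : 'I_n) :
  Mm n i j = (i == j)%:R + \sum_l Amat edge n i l * Mm n l j.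
Proof.
have H := mulmxV (unit_IA n).
rewrite mulmxBl mul1mx in H.
have H2 : Mm n = 1%:M + Amat edge n *m Mm n.
  by rewrite -H /Mm addrC subrK.
by rewrite {1}H2 !mxE.
Qed.

Lemma desc_ind n (P : 'I_n -> Prop) :
  (forall i : 'I_n, (forall l : 'I_n, (i < l)%nat -> P l) -> P i) -> forall i, P i.
Proof.
move=> H.
suff: forall d (i : 'I_n), (n <= i + d)%nat -> P i.
  by move=> h i; apply: (h n); rewrite leq_addl.
elim=> [|d IH] i hi.
  by move: (ltn_ord i); rewrite ltnNge -(addn0 i) hi.
apply: H => l lt; apply: IH; rewrite addnS in hi.
by apply: leq_trans hi _; rewrite ltn_add2r.
Qed.

Lemma M_ge0 n (i j : 'I_n) : 0 <= Mm n i j.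
Proof.
move: i; apply: desc_ind => i IH.
rewrite M_rec addr_ge0 ?ler0n // sumr_ge0 // => l _.
rewrite Amat_E; case E: edge; last by rewrite mul0r.
rewrite mul1r; apply: IH; by move: (Hedge E) => /andP[_]; rewrite ltnS.
Qed.

Lemma M_reach n (i j : 'I_n) : Mm n i j != 0 <-> reach i.+1 j.+1.
Proof.
move: i; apply: desc_ind => i IH.
rewrite M_rec; split.
  case: (eqVneq i j) => [->|neq]; first by move=> _; apply: rrefl.
  rewrite add0r => h.
  have [l _ hl] : exists2 l, true & Amat edge n i l * Mm n l j != 0.
    apply/exists_inP; apply: contraNT h; rewrite negb_exists_in => /forall_inP h.
    by rewrite big1 // => l _; apply/eqP; apply: negbNE (h l _).
  move: hl; rewrite Amat_E; case E: edge; last by rewrite mul0r eqxx.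
  rewrite mul1r => /(IH l); move: (Hedge E) => /andP[_]; rewrite ltnS => lt.
  by move=> /(_ lt) r; apply: rstep E r.
move=> r; rewrite lt0r_neq0 //.
have hs : 0 <= \sum_l Amat edge n i l * Mm n l j.
  rewrite sumr_ge0 // => l _; rewrite mulr_ge0 ?M_ge0 // Amat_E; by case: edge.
case: (reach_inv r) => [Ha|[b [E r1]]].
  have Eij : i = j by apply: val_inj; apply: succn_inj.
  rewrite Eij in hs *; by rewrite eqxx mulr1n (ltr_pwDl ltr01 hs).
have lb := Hedge E; move/andP: lb => [_ lb].
have bn : (b.-1 < n)%nat.
  have := reach_le r1; case: b {E r1} lb => // b _ /= hb.
  by apply: leq_trans (ltn_ord j); rewrite -ltnS.
pose l := Ordinal bn.
have lt : (i < l)%nat by rewrite /= -ltnS prednK //; case: b {E r1 bn l} lb.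
have Eb : b = l.+1 by rewrite /= prednK //; case: b {E r1 bn l lt} lb.
rewrite Eb in E r1.
have := (IH l lt).2 r1 => hl.
rewrite ltr_wpDl ?ler0n //.
rewrite (bigD1 l) //= Amat_E E mul1r ltr_wpDr ?lt0r ?hl ?M_ge0 //.
rewrite sumr_ge0 // => m _; rewrite mulr_ge0 ?M_ge0 // Amat_E; by case: edge.
Qed.

Definition rb (a b : nat) : bool :=
  if excluded_middle_informative (reach a.+1 b.+1) then true else false.

Lemma rbP a b : reflect (reach a.+1 b.+1) (rb a b).
Proof. rewrite /rb; case: excluded_middle_informative => h; by constructor. Qed.

Lemma rbb a : rb a a.
Proof. apply/rbP; exact: rrefl. Qed.

Lemma rb_le a b : rb a b -> (a <= b)%nat.
Proof. by move/rbP/reach_le. Qed.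

Lemma rb_trans a b c : rb a b -> rb b c -> rb a c.
Proof. move=> /rbP h1 /rbP h2; apply/rbP; exact: reach_trans h1 h2. Qed.

Lemma TmatE n (i j : 'I_n) : Tmat edge n i j = if rb i j then 1 else 0.
Proof.
rewrite mxE; have := M_reach i j; rewrite /Mm.
case: (rbP i j) => h [h1 h2].
  by rewrite (negbTE (h2 h)).
by case: eqP => // /eqP /h1.
Qed.

Lemma TblockE k (i j : 'I_k) : Tblock edge k i j = if rb i j then 1 else 0.
Proof. by rewrite mxE TmatE. Qed.

Lemma tcolE k (i : 'I_k) : tcol edge k i ord0 = if rb i k then 1 else 0.
Proof. by rewrite mxE TmatE. Qed.

Lemma inFE k (j : 'I_k) : inF edge j = rb j k.
Proof. by rewrite /inF TmatE; case: rb; rewrite ?eqxx. Qed.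

Lemma unit_Tblock k : Tblock edge k \in unitmx.
Proof.
rewrite unitmxE -det_tr det_trig.
  rewrite big1 ?unitr1 // => i _; by rewrite mxE TblockE rbb.
apply/is_trig_mxP => i j lt; rewrite mxE TblockE.
case h: rb => //; move: (rb_le h); by rewrite leqNgt lt.
Qed.

Lemma Tw k (i : 'I_k) :
  \sum_(m < k) (if rb i m then 1 else 0) * wvec edge k m ord0 =
  if rb i k then 1 else 0.
Proof.
have H : Tblock edge k *m wvec edge k = tcol edge k.
  by rewrite /wvec mulmxA mulmxV ?unit_Tblock // mul1mx.
have := congr1 (fun M : 'cV[rat]_k => M i ord0) H; rewrite tcolE mxE => <-.
by apply: eq_bigr => m _; rewrite TblockE.
Qed.

End Graph.

Lemma lnM (x y : R) : 0 < x -> 0 < y -> ln (x * y) = ln x + ln y.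
Proof. move=> /RltP hx /RltP hy; exact: ln_mult. Qed.

Lemma lnV (x : R) : 0 < x -> ln (x^-1) = - ln x.
Proof. move=> /RltP hx; exact: ln_Rinv. Qed.

Lemma lnD (x y : R) : 0 < x -> 0 < y -> ln (x / y) = ln x - ln y.
Proof. move=> hx hy; rewrite lnM ?lnV ?invr_gt0 //. Qed.

Lemma expln (x : R) : 0 < x -> exp (ln x) = x.
Proof. move=> /RltP hx; exact: exp_ln. Qed.

Lemma expD (x y : R) : exp (x + y) = exp x * exp y.
Proof. exact: exp_plus. Qed.

Lemma exp_gt0 (x : R) : 0 < exp x.
Proof. apply/RltP; exact: exp_pos. Qed.

Lemma ln_prod (I : finType) (P : pred I) (F : I -> R) :
  (forall j, P j -> 0 < F j) -> ln (\prod_(j | P j) F j) = \sum_(j | P j) ln (F j).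
Proof.
move=> H.
have : 0 < \prod_(j | P j) F j /\ ln (\prod_(j | P j) F j) = \sum_(j | P j) ln (F j).
  apply: (big_rec2 (fun a b => 0 < a /\ ln a = b)).
    by split; [exact: ltr01 | exact: ln_1].
  move=> j a b Pj [ha hb]; split; first by rewrite mulr_gt0 ?H.
  by rewrite lnM ?H // hb.
by case.
Qed.

Lemma sum_pos n (F : 'I_n -> R) (i : 'I_n) : (forall j, 0 < F j) -> 0 < \sum_j F j.
Proof.
move=> H; rewrite (bigD1 i) //=; apply: ltr_pwDl (H i) _.
by apply: sumr_ge0 => j _; apply: ltW.
Qed.

Lemma prop_eq n (p q : 'I_n -> R) :
  (forall i, 0 < p i) -> (forall i, 0 < q i) -> \sum_i p i = 1 -> \sum_i q i = 1 ->
  (forall i i', ln (p i) - ln (q i) = ln (p i') - ln (q i')) -> forall i, p i = q i.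
Proof.
move=> hp hq sp sq H i.
set d := ln (p i) - ln (q i).
have E : forall j, p j = q j * exp d.
  move=> j; rewrite /d (H i j).
  have -> : q j * exp (ln (p j) - ln (q j)) = exp (ln (q j) + (ln (p j) - ln (q j))).
    by rewrite [in RHS]expD (expln (hq j)).
  by rewrite [ln (q j) + _]addrC subrK (expln (hp j)).
have ed : exp d = 1.
  by rewrite -sp (eq_bigr _ (fun j _ => E j)) -mulr_suml sq mul1r.
by rewrite E ed mulr1.
Qed.

Lemma norm_alg n (a b : 'I_n -> R) (Z : R) i : Z != 0 ->
  a i * (b i / Z) / \sum_j a j * (b j / Z) = b i * a i / \sum_j b j * a j.
Proof.
move=> hZ.
have -> : \sum_j a j * (b j / Z) = (\sum_j b j * a j) / Z.
  by rewrite mulr_suml; apply: eq_bigr => j _; field.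
set S := \sum_j b j * a j.
have [->|hS] := eqVneq S 0; first by rewrite mul0r !invr0 !mulr0.
by field; apply/andP.
Qed.

Section Real.
Variables (X Y A : nat) (pi0 : 'I_X -> R) (B : 'I_X -> 'I_Y -> R)
  (edge : nat -> nat -> bool) (sel : ('I_X -> R) -> 'I_A)
  (pim pi : (nat -> 'I_Y) -> nat -> 'I_X -> R) (act : (nat -> 'I_Y) -> nat -> 'I_A).
Hypothesis Hpi0pos : forall i, 0 < pi0 i.
Hypothesis HBpos : forall i y, 0 < B i y.
Hypothesis HBsum : forall i, \sum_(y < Y) B i y = 1.
Hypothesis Hedge : forall m n, edge m n -> (leq 1 m && leq m.+1 n).
Hypothesis Hpimpos : forall ys k i, 0 < pim ys k.+1 i.
Hypothesis Hpimsum : forall ys k, \sum_(i < X) pim ys k.+1 i = 1.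
Hypothesis Hpimln : forall ys k, exists cst : R, forall i,
  ln (pim ys k.+1 i) = ln (pi0 i)
     + \sum_(j < k) ratr (wvec edge k j ord0) * (ln (pi ys j.+1 i) - ln (pi0 i)) + cst.
Hypothesis Hact : forall ys k, act ys k.+1 = sel (etaOf B (pim ys k.+1) (ys k.+1)).
Hypothesis Hpi : forall ys k, pi ys k.+1 = pubUpdate B sel (pim ys k.+1) (act ys k.+1).

Definition lam ys m i := Pact B sel (pim ys m.+1) (act ys m.+1) i.
Definition Lg ys m i := ln (lam ys m i).

Lemma Pact_E p a i : Pact B sel p a i = \sum_(y < Y | sel (etaOf B p y) == a) B i y.
Proof. by rewrite [RHS]big_mkcond. Qed.

Lemma lam_pos ys m i : 0 < lam ys m i.
Proof.
rewrite /lam Pact_E (bigD1 (ys m.+1)) /=; last by rewrite Hact.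
apply: ltr_pwDl (HBpos _ _) _; apply: sumr_ge0 => y _; exact: ltW.
Qed.

Definition Zn ys m := \sum_(j < X) lam ys m j * pim ys m.+1 j.

Lemma pi_E ys m i : pi ys m.+1 i = lam ys m i * pim ys m.+1 i / Zn ys m.
Proof. by rewrite Hpi /pubUpdate RdivE. Qed.

Lemma Zn_pos ys m (i : 'I_X) : 0 < Zn ys m.
Proof. apply: (sum_pos i) => j; rewrite mulr_gt0 ?lam_pos ?Hpimpos //. Qed.

Definition Sg ys k i := \sum_(j < k | rb edge j k) Lg ys j i.

Lemma sum_split k j (F : nat -> R) : (j < k)%nat ->
  \sum_(m < k | rb edge m j) F m = \sum_(m < j | rb edge m j) F m + F j.
Proof.
move=> hj.
have -> : \sum_(m < k | rb edge m j) F m = \sum_(m < k | rb edge m j && (m < j.+1)%nat) F m.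
  apply: eq_bigl => m; case h: rb => //=; by rewrite ltnS (rb_le Hedge h).
transitivity (\sum_(m < j.+1 | rb edge m j) F m).
  by rewrite (@big_ord_widen_cond R 0 +%R j.+1 k (fun m => rb edge m j) F hj).
by rewrite big_mkcond big_ord_recr /= rbb -big_mkcond.
Qed.

Lemma ratr_if (b : bool) : ratr (if b then 1 else 0 : rat) = (if b then 1 else 0 : R).
Proof. by case: b; rewrite ?rmorph1 ?rmorph0. Qed.

Lemma wsum k ys i :
  \sum_(j < k) ratr (wvec edge k j ord0) * \sum_(m < k | rb edge m j) Lg ys m i
  = Sg ys k i.
Proof.
rewrite /Sg.
have -> : \sum_(j < k) ratr (wvec edge k j ord0) * \sum_(m < k | rb edge m j) Lg ys m i
  = \sum_(j < k) \sum_(m < k) Lg ys m i * ((if rb edge m j then 1 else 0) * ratr (wvec edge k j ord0)).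
  apply: eq_bigr => j _; rewrite big_mkcond mulr_sumr; apply: eq_bigr => m _.
  by case: rb; rewrite ?mul1r ?mul0r ?mulr0 // mulrC.
rewrite exchange_big [RHS]big_mkcond /=; apply: eq_bigr => m _.
rewrite -mulr_sumr.
have -> : \sum_(j < k) (if rb edge m j then 1 else 0) * ratr (wvec edge k j ord0)
   = @ratr R (\sum_(j < k) ((if rb edge m j then 1 else 0) : rat) * wvec edge k j ord0).
  rewrite rmorph_sum; apply: eq_bigr => j _; rewrite rmorphM; case: rb; by rewrite ?rmorph1 ?rmorph0.
rewrite (Tw Hedge m); case: rb; by rewrite ?rmorph1 ?rmorph0 ?mulr1 ?mulr0.
Qed.

Lemma L1 ys k i i' :
  ln (pim ys k.+1 i) - ln (pi0 i) - Sg ys k i =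
  ln (pim ys k.+1 i') - ln (pi0 i') - Sg ys k i'.
Proof.
move: i i'; elim/ltn_ind: k => k IH i i'.
pose e (j : nat) x := ln (pim ys j.+1 x) - ln (pi0 x) - Sg ys j x - ln (Zn ys j).
have F1 : forall (j : 'I_k) x, ln (pi ys j.+1 x) - ln (pi0 x) =
             \sum_(m < k | rb edge m j) Lg ys m x + e j x.
  move=> j x; rewrite pi_E lnD ?Zn_pos ?mulr_gt0 ?lam_pos ?Hpimpos //.
  rewrite lnM ?lam_pos ?Hpimpos // (sum_split (fun m => Lg ys m x) (ltn_ord j)).
  rewrite /e /Sg /Lg; lra.
have [cst Hc] := Hpimln ys k.
have G : forall x, ln (pim ys k.+1 x) - ln (pi0 x) - Sg ys k x =
     cst + \sum_(j < k) ratr (wvec edge k j ord0) * e j x.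
  move=> x; rewrite Hc.
  under eq_bigr => j _ do rewrite F1 mulrDr.
  rewrite big_split /= wsum; lra.
rewrite !G; congr (_ + _); apply: eq_bigr => j _; congr (_ * _).
by rewrite /e (IH j (ltn_ord j) i i').
Qed.

Lemma L2 k : forall ys ys',
  (forall j, (j < k)%nat -> rb edge j k -> act ys j.+1 = act ys' j.+1) ->
  forall i, pim ys k.+1 i = pim ys' k.+1 i.
Proof.
elim/ltn_ind: k => k IH ys ys' H.
have Hl : forall m, (m < k)%nat -> rb edge m k -> forall x, lam ys m x = lam ys' m x.
  move=> m hm hr x; rewrite /lam (H m hm hr).
  have -> : pim ys m.+1 = pim ys' m.+1; last by [].
  apply: functional_extensionality; apply: IH => // j hj hrj.
  apply: H; [exact: ltn_trans hj hm | exact: rb_trans hrj hr].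
have HS : forall x, Sg ys k x = Sg ys' k x.
  move=> x; apply: eq_bigr => j hj; by rewrite /Lg (Hl j (ltn_ord j) hj).
apply: prop_eq => //.
move=> i i'; have h1 := L1 ys k i i'; have h2 := L1 ys' k i i'.
rewrite !HS in h1; lra.
Qed.


Lemma bigRE (I : Type) (r : seq I) (P : pred I) (F : I -> R) :
  \big[Rplus/IZR Z0]_(i <- r | P i) F i = \sum_(i <- r | P i) F i.
Proof. by []. Qed.

Lemma ext_E k ys0 (f : {ffun 'I_k.+1 -> 'I_Y}) (j : 'I_k.+1) : ext ys0 f j.+1 = f j.
Proof. by rewrite /ext valK. Qed.

Lemma key k ys0 (f : {ffun 'I_k.+1 -> 'I_Y}) j :
  (forall m, (m < j)%nat -> rb edge m j -> act (ext ys0 f) m.+1 = act ys0 m.+1) ->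
  act (ext ys0 f) j.+1 = sel (etaOf B (pim ys0 j.+1) (ext ys0 f j.+1)).
Proof.
move=> H; rewrite Hact.
have -> : pim (ext ys0 f) j.+1 = pim ys0 j.+1.
  by apply: functional_extensionality; apply: L2.
done.
Qed.

Lemma fair_nat k ys0 (f : {ffun 'I_k.+1 -> 'I_Y}) :
  [forall j : 'I_k, inF edge j ==> (act (ext ys0 f) j.+1 == act ys0 j.+1)] ->
  forall j, (j < k)%nat -> rb edge j k -> act (ext ys0 f) j.+1 = act ys0 j.+1.
Proof.
move=> /forallP H j hj hr; apply/eqP; have := H (Ordinal hj).
by rewrite (inFE Hedge) /= hr.
Qed.

Lemma fair_equiv k ys0 (f : {ffun 'I_k.+1 -> 'I_Y}) :
  [forall j : 'I_k, inF edge j ==> (act (ext ys0 f) j.+1 == act ys0 j.+1)] =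
  [forall j : 'I_k, rb edge j k ==>
     (sel (etaOf B (pim ys0 j.+1) (ext ys0 f j.+1)) == act ys0 j.+1)].
Proof.
apply/idP/idP => H.
  have Hn := fair_nat H.
  apply/forallP => j; apply/implyP => hr.
  rewrite -key; first by apply/eqP; apply: Hn (ltn_ord j) hr.
  move=> m hm hrm; apply: Hn; [exact: ltn_trans hm (ltn_ord j) | exact: rb_trans hrm hr].
have Hn : forall j, (j < k)%nat -> rb edge j k -> act (ext ys0 f) j.+1 = act ys0 j.+1.
  elim/ltn_ind => j IH hj hr.
  rewrite key; last first.
    move=> m hm hrm; apply: IH => //; [exact: ltn_trans hm hj | exact: rb_trans hrm hr].
  apply/eqP; move/forallP: H => H; have := H (Ordinal hj); by rewrite /= hr.
apply/forallP => j; rewrite (inFE Hedge); apply/implyP => hr; apply/eqP.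
exact: Hn (ltn_ord j) hr.
Qed.

Lemma prod_event n (Q : 'I_n -> 'I_Y -> bool) (i : 'I_X) :
  \sum_(f : {ffun 'I_n -> 'I_Y} | [forall j, Q j (f j)]) \prod_j B i (f j)
  = \prod_j \sum_(y | Q j y) B i y.
Proof.
symmetry.
rewrite (eq_bigr (fun j => \sum_y (if Q j y then B i y else 0))); last first.
  by move=> j _; rewrite big_mkcond.
rewrite bigA_distr_bigA [RHS]big_mkcond; apply: eq_bigr => f _.
case: (boolP [forall j, Q j (f j)]) => [/forallP h|/forallPn [j nj]].
  by apply: eq_bigr => j _; rewrite h.
by rewrite (bigD1 j) //= (negbTE nj) mul0r.
Qed.

Definition Qp k ys0 (g : pred 'I_Y) (j : 'I_k.+1) (y : 'I_Y) : bool :=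
  if (j < k)%nat then rb edge j k ==> (sel (etaOf B (pim ys0 j.+1) y) == act ys0 j.+1)
  else g y.

Definition Pk k ys0 i := \prod_(j < k | rb edge j k) lam ys0 j i.
Definition NP k ys0 i := pi0 i * Pk k ys0 i.

Lemma core k ys0 (g : pred 'I_Y) i :
  \sum_(f : {ffun 'I_k.+1 -> 'I_Y} | [forall j : 'I_k, inF edge j ==>
        (act (ext ys0 f) j.+1 == act ys0 j.+1)] && g (f ord_max)) jointP pi0 B i f
  = NP k ys0 i * \sum_(y | g y) B i y.
Proof.
rewrite (eq_bigl (fun f : {ffun 'I_k.+1 -> 'I_Y} => [forall j, Qp ys0 g j (f j)])); last first.
  move=> f; rewrite fair_equiv; apply/andP/forallP.
    case=> /forallP h hg j; rewrite /Qp; case: ifP => hj.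
      move: (h (Ordinal hj)); rewrite (ext_E ys0 f j); by apply.
    have -> : j = ord_max.
      apply: val_inj => /=; apply/eqP; rewrite eqn_leq -ltnS ltn_ord /=.
      by rewrite leqNgt hj.
    exact: hg.
  move=> h; split.
    apply/forallP => j.
    have E : ext ys0 f j.+1 = f (widen_ord (leqnSn k) j) := ext_E ys0 f (widen_ord (leqnSn k) j).
    rewrite E; have := h (widen_ord (leqnSn k) j); rewrite /Qp /= ltn_ord; by apply.
  by have := h ord_max; rewrite /Qp /= ltnn.
rewrite (eq_bigr (fun f : {ffun 'I_k.+1 -> 'I_Y} => pi0 i * \prod_j B i (f j))) // -mulr_sumr prod_event big_ord_recr /=.
have E1 : \prod_(j < k) \sum_(y | Qp ys0 g (widen_ord (leqnSn k) j) y) B i y = Pk k ys0 i.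
  rewrite /Pk [RHS]big_mkcond; apply: eq_bigr => j _; rewrite /Qp /= ltn_ord.
  case: rb => /=; first by rewrite /lam Pact_E.
  exact: HBsum.
have E2 : \sum_(y | Qp ys0 g (@ord_max k) y) B i y = \sum_(y | g y) B i y.
  by apply: eq_bigl => y; rewrite /Qp /= ltnn.
by rewrite E1 E2 mulrA.
Qed.

Lemma NP_pos k ys0 x : 0 < NP k ys0 x.
Proof. rewrite /NP mulr_gt0 // /Pk prodr_gt0 // => j _; exact: lam_pos. Qed.

Lemma C0 k ys0 i : pim ys0 k.+1 i = NP k ys0 i / \sum_x NP k ys0 x.
Proof.
have Zpos : 0 < \sum_x NP k ys0 x := sum_pos i (NP_pos k ys0).
apply: (prop_eq (q := fun x => NP k ys0 x / \sum_x NP k ys0 x)).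
- by move=> x; apply: Hpimpos.
- move=> x; rewrite divr_gt0 ?NP_pos //.
- exact: Hpimsum.
- by rewrite -mulr_suml divff // gt_eqF.
move=> x x'; rewrite !lnD ?NP_pos // /NP !lnM ?Hpi0pos // /Pk.
rewrite (@ln_prod 'I_k (fun j => rb edge j k) (fun j => lam ys0 j x) (fun j _ => lam_pos ys0 j x)) (@ln_prod 'I_k (fun j => rb edge j k) (fun j => lam ys0 j x') (fun j _ => lam_pos ys0 j x')).
have := L1 ys0 k x x'; rewrite /Sg /Lg; lra.
all: apply: prodr_gt0 => j _; exact: lam_pos.
Qed.

Lemma condP_E k (ev : {ffun 'I_k.+1 -> 'I_Y} -> bool) (N : 'I_X -> R) :
  (forall j, \sum_(f | ev f) jointP pi0 B j f = N j) ->
  forall i, condP pi0 B ev i = N i / \sum_j N j.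
Proof.
move=> H i; rewrite /condP RdivE /sumX !bigRE H; congr (_ / _).
by apply: eq_bigr => j _; rewrite bigRE H.
Qed.

Lemma main k ys0 i :
    let fair := fun f : {ffun 'I_k.+1 -> 'I_Y} =>
      [forall j : 'I_k, inF edge j ==> (act (ext ys0 f) j.+1 == act ys0 j.+1)] in
    pim ys0 k.+1 i = condP pi0 B fair i /\
    etaOf B (pim ys0 k.+1) (ys0 k.+1) i =
      condP pi0 B (fun f => fair f && (f ord_max == ys0 k.+1)) i /\
    pi ys0 k.+1 i =
      condP pi0 B (fun f => fair f && (act (ext ys0 f) k.+1 == act ys0 k.+1)) i.
Proof.
move=> fair.
have Zpos : 0 < \sum_x NP k ys0 x := sum_pos i (NP_pos k ys0).
have Zne : \sum_x NP k ys0 x != 0 by rewrite gt_eqF.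
have Hp : pim ys0 k.+1 = fun x => NP k ys0 x / \sum_x NP k ys0 x.
  by apply: functional_extensionality => x; rewrite C0.
split.
  rewrite (@condP_E k fair (fun j => NP k ys0 j * \sum_(y | xpredT y) B j y)); last first.
    move=> j; rewrite -core; apply: eq_bigl => f; by rewrite andbT.
  rewrite C0; congr (_ / _); rewrite ?HBsum ?mulr1 //.
  by apply: eq_bigr => j _; rewrite HBsum mulr1.
split.
  rewrite (@condP_E k _ (fun j => NP k ys0 j * \sum_(y | y == ys0 k.+1) B j y)); last first.
    by move=> j; rewrite -core.
  rewrite big_pred1_eq.
  under [X in _ = _ / X]eq_bigr => j _ do rewrite big_pred1_eq.
  rewrite /etaOf RdivE /sumX bigRE Hp.
  exact: (norm_alg (fun j => B j (ys0 k.+1)) (NP k ys0) i Zne).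
set g := fun y => sel (etaOf B (pim ys0 k.+1) y) == act ys0 k.+1.
rewrite (@condP_E k _ (fun j => NP k ys0 j * \sum_(y | g y) B j y)); last first.
  move=> j; rewrite -core; apply: eq_bigl => f; rewrite /g.
  apply/andP/andP => -[hf h]; split => //.
    have E : act (ext ys0 f) k.+1 = sel (etaOf B (pim ys0 k.+1) (f ord_max)).
      rewrite key; first by rewrite (ext_E ys0 f ord_max).
      move=> m hm hrm; apply: (fair_nat hf) => //.
    by rewrite -E.
  have E : act (ext ys0 f) k.+1 = sel (etaOf B (pim ys0 k.+1) (f ord_max)).
    rewrite key; first by rewrite (ext_E ys0 f ord_max).
    move=> m hm hrm; apply: (fair_nat hf) => //.
  by rewrite E.
have Eg : forall j, \sum_(y | g y) B j y = lam ys0 k j by move=> j; rewrite /lam Pact_E.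
rewrite Eg; under [X in _ = _ / X]eq_bigr => j _ do rewrite Eg.
rewrite pi_E /Zn Hp.
exact: (norm_alg (lam ys0 k) (NP k ys0) i Zne).
Qed.

End Real.

Unset Implicit Arguments.
Bind Scope R_scope with R.
Close Scope ring_scope.
Open Scope R_scope.

Theorem theorem2
  (X Y A : nat)
  (pi0 : 'I_X -> R) (B : 'I_X -> 'I_Y -> R) (c : 'I_A -> 'I_X -> R)
  (edge : nat -> nat -> bool)
  (sel : ('I_X -> R) -> 'I_A)
  (pim pi : (nat -> 'I_Y) -> nat -> 'I_X -> R)
  (act : (nat -> 'I_Y) -> nat -> 'I_A)
  (* prior *)
  (Hpi0pos : forall i, (0 < pi0 i))
  (Hpi0sum : sumX pi0 = 1)
  (* observation likelihoods *)
  (HBpos : forall i y, (0 < B i y))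
  (HBsum : forall i, \big[Rplus/0]_(y < Y) B i y = 1)
  (* DAG: every edge (m,n) has 1 <= m < n *)
  (Hedge : forall m n, edge m n -> (leq 1 m && leq m.+1 n))
  (* a(pi,y) = argmin_a c_a' eta with a fixed deterministic tie-breaking *)
  (Hsel : forall eta a,
      (sumX (fun i => c (sel eta) i * eta i) <= sumX (fun i => c a i * eta i)))
  (* recommendation belief of node n = k+1 (log-linear combination) *)
  (Hpim : forall ys k,
      (forall i, (0 < pim ys k.+1 i)) /\ sumX (pim ys k.+1) = 1 /\
      exists cst : R, forall i,
        ln (pim ys k.+1 i) =
        (ln (pi0 i)
         + \big[Rplus/0]_(j < k)
             (ratR (wvec edge k j ord0) * (ln (pi ys j.+1 i) - ln (pi0 i)))
         + cst))
  (* action of node n *)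
  (Hact : forall ys k, act ys k.+1 = sel (etaOf B (pim ys k.+1) (ys k.+1)))
  (* public belief of node n *)
  (Hpi : forall ys k,
      pi ys k.+1 = pubUpdate B sel (pim ys k.+1) (act ys k.+1)) :
  forall (ys0 : nat -> 'I_Y) (k : nat) (i : 'I_X),
    let fair := fun f : {ffun 'I_k.+1 -> 'I_Y} =>
      [forall j : 'I_k, inF edge j ==> (act (ext ys0 f) j.+1 == act ys0 j.+1)] in
    pim ys0 k.+1 i = condP pi0 B fair i /\
    etaOf B (pim ys0 k.+1) (ys0 k.+1) i =
      condP pi0 B (fun f => fair f && (f ord_max == ys0 k.+1)) i /\
    pi ys0 k.+1 i =
      condP pi0 B (fun f => fair f && (act (ext ys0 f) k.+1 == act ys0 k.+1)) i.
Proof.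
move=> ys0 k i.
apply: main.
- by move=> x; apply/RltP; apply: Hpi0pos.
- by move=> x y; apply/RltP; apply: HBpos.
- exact: HBsum.
- exact: Hedge.
- by move=> ys k' x; apply/RltP; case: (Hpim ys k') => h _; apply: h.
- by move=> ys k'; case: (Hpim ys k') => _ [h _]; exact: h.
- move=> ys k'; case: (Hpim ys k') => _ [_ [cst Hc]]; exists cst => x.
  rewrite Hc !RplusE bigRE; congr (_ + _ + _); apply: eq_bigr => j _.
  by rewrite ratRE.
- exact: Hact.
- exact: Hpi.
Qed.
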